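(* Let $K$ be a field of characteristic zero, $x=(x_1,\dots,x_n)$, and let $f\in K[x]$ with $\deg f\neq 1$. Fix an index $i$ and suppose that $h:=f-x_i$ is a polynomial in a linear form, i.e. $h=q(\ell)$ for some $q\in K[t]$ and some linear form $\ell\in K[x]$. If $h\in K[x_i]$, then $f$ is not a component of a Keller map. If $h\notin K[x_i]$, then $f$ is a tame coordinate.
   Context: A Keller map is a polynomial map $F\in K[x]^n$ with $\det\mathcal{J}F\in K^{*}$. A polynomial $f$ is a tame coordinate if it is a component of a tame automorphism of $K[x]$, i.e. of an invertible polynomial map that is a composition of invertible linear (affine) maps and elementary maps $(x_1+p(x_2,\dots,x_n),x_2,\dots,x_n)$. *)

(* Defs.v *)
From HB Require Import structures.
From mathcomp Require Import all_boot all_order all_algebra.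
From mathcomp Require Import mpoly.
Set Implicit Arguments. Unset Strict Implicit. Unset Printing Implicit Defensive.
Import Order.TTheory GRing.Theory.
Local Open Scope ring_scope.

Definition polymap (K : fieldType) (n : nat) := n.-tuple {mpoly K[n]}.

Definition pm_comp (K : fieldType) (n : nat) (F G : polymap K n) : polymap K n :=
  [tuple (tnth F a) \mPo G | a < n].

Definition pm_id (K : fieldType) (n : nat) : polymap K n :=
  [tuple 'X_a | a < n].

Definition jacobian (K : fieldType) (n : nat) (F : polymap K n)
  : 'M[{mpoly K[n]}]_n :=
  \matrix_(a < n, b < n) (tnth F a)^`M(b).

Definition keller (K : fieldType) (n : nat) (F : polymap K n) : Prop :=
  exists c : K, c != 0 /\ \det (jacobian F) = c%:MP.

Definition keller_component (K : fieldType) (n : nat) (f : {mpoly K[n]}) : Prop :=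
  exists (F : polymap K n) (j : 'I_n), keller F /\ tnth F j = f.

Definition affine_aut (K : fieldType) (n : nat) (F : polymap K n) : Prop :=
  exists (A : 'M[K]_n) (c : 'I_n -> K), A \in unitmx /\
    F = [tuple \sum_(b < n) A a b *: 'X_b + (c a)%:MP | a < n].

(* Elementary map: x_k |-> x_k + p(the other variables), x_a |-> x_a (a != k). *)
Definition elementary (K : fieldType) (n : nat) (F : polymap K n) : Prop :=
  exists (k : 'I_n) (p : {mpoly K[n]}),
    (forall m, m \in msupp p -> m k = 0%N) /\
    F = [tuple (if a == k then 'X_a + p else 'X_a) | a < n].

Inductive tame (K : fieldType) (n : nat) : polymap K n -> Prop :=
  | tame_id : tame (pm_id K n)
  | tame_aff G E : tame G -> affine_aut E -> tame (pm_comp G E)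
  | tame_elem G E : tame G -> elementary E -> tame (pm_comp G E).

Definition tame_coordinate (K : fieldType) (n : nat) (f : {mpoly K[n]}) : Prop :=
  exists (F : polymap K n) (j : 'I_n), tame F /\ tnth F j = f.

Definition usubst (K : fieldType) (n : nat) (q : {poly K}) (l : {mpoly K[n]})
  : {mpoly K[n]} := \sum_(j < size q) q`_j *: l ^+ j.

Definition in_Kxi (K : fieldType) (n : nat) (i : 'I_n) (h : {mpoly K[n]}) : Prop :=
  exists q : {poly K}, h = usubst q 'X_i.

(* Main.v *)
Require Import Defs.
From HB Require Import structures.
From mathcomp Require Import all_boot all_order all_algebra.
From mathcomp Require Import mpoly.
Import GRing.Theory.
Local Open Scope ring_scope.
Set Implicit Arguments. Unset Strict Implicit. Unset Printing Implicit Defensive.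

Section H.
Variable K : fieldType.
Variable n : nat.
Implicit Types (p : {mpoly K[n]}).

Lemma char0_mulrn (x : K) k : [pchar K] =i pred0 -> x *+ k.+1 = 0 -> x = 0.
Proof.
move=> /pcharf0P H; rewrite -mulr_natr => /eqP; rewrite mulf_eq0 H /=.
by rewrite orbF => /eqP.
Qed.

Lemma nodep_deriv0 p k : [pchar K] =i pred0 -> p^`M(k) = 0 ->
  forall m, m \in msupp p -> m k = 0%N.
Proof.
move=> ch Hd m Hm; apply/eqP; apply: contraTT Hm => Hmk.
rewrite mcoeff_msupp negbK.
pose m' : 'X_{1..n} := [multinom (m a - (a == k))%N | a < n].
have Em : m = (m' + U_(k))%MM.
  apply/mnmP => a; rewrite mnmDE mnmE mnm1E.
  rewrite [k == a]eq_sym; case: eqP => [->|_] /=; last by rewrite subn0 addn0.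
  by rewrite subnK // lt0n.
have := mcoeff_deriv k m' p; rewrite Hd mcoeff0 -Em => /esym /(char0_mulrn ch) ->; exact: eqxx.
Qed.

Lemma derivX_ne (a b : 'I_n) : a != b -> ('X_a : {mpoly K[n]})^`M(b) = 0.
Proof. by move=> H; rewrite mderivX mnm1E (negbTE H) scale0r. Qed.

Lemma derivXn_ne (a b : 'I_n) k : a != b -> (('X_a : {mpoly K[n]}) ^+ k)^`M(b) = 0.
Proof. by move=> H; rewrite mpolyXn mderivX mulmnE mnm1E (negbTE H) scale0r. Qed.

Lemma deriv_usubstX (R : {poly K}) (a b : 'I_n) : a != b ->
  (usubst R ('X_a : {mpoly K[n]}))^`M(b) = 0.
Proof.
move=> H; rewrite /usubst raddf_sum big1 // => k _.
by rewrite /= mderivZ derivXn_ne // scaler0.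
Qed.

Lemma coef_usubstX (R : {poly K}) (a : 'I_n) m :
  (usubst R ('X_a : {mpoly K[n]}))@_m =
     \sum_(k < size R) R`_k * ((U_(a) *+ k)%MM == m)%:R.
Proof.
rewrite /usubst raddf_sum; apply: eq_bigr => k _.
by rewrite /= mcoeffZ mpolyXn mcoeffX.
Qed.

Lemma comp_X_tnth (a : 'I_n) (lq : n.-tuple {mpoly K[n]}) :
  'X_a \mPo lq = tnth lq a.
Proof. by rewrite comp_mpolyXU -tnth_nth. Qed.

Lemma comp_usubst (R : {poly K}) l (lq : n.-tuple {mpoly K[n]}) :
  usubst R l \mPo lq = usubst R (l \mPo lq).
Proof.
rewrite /usubst raddf_sum; apply: eq_bigr => k _.
by rewrite /= comp_mpolyZ rmorphXn.
Qed.

Lemma usubst_widen (R : {poly K}) (l : {mpoly K[n]}) N : (size R <= N)%N ->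
  usubst R l = \sum_(k < N) R`_k *: l ^+ k.
Proof.
move=> H; rewrite /usubst (@big_ord_widen _ 0 +%R (size R) N (fun k : nat => R`_k *: l ^+ k) H).
rewrite big_mkcond /=; apply: eq_bigr => k _.
case: ifP => // /negbT; rewrite -leqNgt => Hk.
by rewrite nth_default // scale0r.
Qed.

Lemma lin_repr (l : {mpoly K[n]}) : l \is 1.-homog -> l = \sum_(k < n) l@_U_(k) *: 'X_k.
Proof.
move=> Hl; apply/mpolyP => m; rewrite raddf_sum /=.
have E : forall k : 'I_n, (l@_U_(k) *: ('X_k : {mpoly K[n]}))@_m =
            l@_U_(k) * ((U_(k) == m)%MM)%:R.
  by move=> k; rewrite mcoeffZ mcoeffX.
under eq_bigr do rewrite E.
case: (boolP (mdeg m == 1%N)) => [/mdeg1P [k0 /eqP ->]|Hm].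
  rewrite (bigD1 k0) //= eqxx mulr1 big1 ?addr0 // => k Hk.
  by rewrite eq_mnm1 (negbTE Hk) mulr0.
rewrite big1; first by rewrite (dhomog_nemf_coeff Hl).
move=> k _; case: eqP => [Ek|]; last by rewrite mulr0.
by move: Hm; rewrite -Ek mdeg1.
Qed.


Lemma mdegUn (i : 'I_n) k : mdeg (U_(i) *+ k)%MM = k.
Proof. by rewrite mdegMn mdeg1 mul1n. Qed.

Lemma part1 (i : 'I_n) f (R : {poly K}) : [pchar K] =i pred0 ->
  msize f != 2%N -> f - 'X_i = usubst R 'X_i -> ~ keller_component f.
Proof.
move=> ch Hs Eh.
have Ef : f = usubst R 'X_i + 'X_i by rewrite -Eh subrK.
have F1 : forall m, m != (U_(i) *+ mdeg m)%MM -> f@_m = 0.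
  move=> m Hm; rewrite Ef mcoeffD coef_usubstX big1.
    rewrite add0r mcoeffX; case: eqP => // E; move: Hm.
    by rewrite -E mdeg1 mulm1n eqxx.
  move=> k _; case: eqP => [E|]; last by rewrite mulr0.
  by move: Hm; rewrite -E mdegUn eqxx.
have F2 : forall b, b != i -> f^`M(b) = 0.
  move=> b Hb; rewrite Ef mderivD deriv_usubstX 1?eq_sym //.
  by rewrite derivX_ne 1?eq_sym // addr0.
move=> [F [j [[c [c0 Hdet]] Fj]]].
rewrite (expand_det_row _ j) (bigD1 i) //= big1 ?addr0 in Hdet; last first.
  by move=> b Hb; rewrite mxE Fj F2 // mul0r.
rewrite mxE Fj in Hdet.
set g := f^`M(i) in Hdet; set C := cofactor _ _ _ in Hdet.
have gC0 : g * C != 0 by rewrite Hdet mpolyC_eq0.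
have g0 : g != 0 by apply: contraNneq gC0 => ->; rewrite mul0r.
have C0 : C != 0 by apply: contraNneq gC0 => ->; rewrite mulr0.
have Eg : g = (g@_0)%:MP.
  apply: msize1_polyC.
  have := msizeM g0 C0; rewrite Hdet msizeC c0 /=.
  have : msize C != 0%N by rewrite msize_poly_eq0.
  case: (msize C) => // k _; rewrite addnS /= => ->; exact: leq_addr.
have g00 : g@_0 != 0 by apply: contraNneq g0 => E; rewrite Eg E mpolyC0.
have Dg : forall k, g@_(U_(i) *+ k)%MM = f@_(U_(i) *+ k.+1)%MM *+ k.+1.
  move=> k; rewrite /g mcoeff_deriv mulmnE mnm1E eqxx mul1n.
  by rewrite mulmSr.
have Fk : forall k, f@_(U_(i) *+ k.+2)%MM = 0.
  move=> k; apply: (@char0_mulrn _ k.+1 ch); rewrite -Dg Eg mcoeffC.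
  have : (U_(i) *+ k.+1 == 0)%MM = false.
    by apply/negbTE; rewrite -mdeg_eq0 mdegUn.
  by move=> ->; rewrite mulr0.
have Fi : f@_U_(i) = g@_0 by have := Dg 0%N; rewrite mulm0n mulm1n mulr1n => ->.
move/eqP: Hs; apply; apply/eqP; rewrite eqn_leq; apply/andP; split.
  rewrite msizeE; apply/bigmax_leqP_seq => m Hm _.
  move: Hm; rewrite mcoeff_msupp => Hm.
  have Em : m = (U_(i) *+ mdeg m)%MM by apply/eqP; apply: contraNT Hm => /F1 ->.
  move: Hm; rewrite [in f@_m]Em; case: (mdeg m) => [|[|k]] //.
  by rewrite Fk eqxx.
have := @msize_mdeg_lt _ _ f U_(i); rewrite mdeg1; apply.
by rewrite mcoeff_msupp Fi.
Qed.


Lemma tnth_comp (G E : polymap K n) a : tnth (pm_comp G E) a = tnth G a \mPo E.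
Proof. by rewrite tnth_mktuple. Qed.

Lemma part2 (i : 'I_n) f (q : {poly K}) (l : {mpoly K[n]}) :
  [pchar K] =i pred0 -> l \is 1.-homog -> f - 'X_i = usubst q l ->
  ~ in_Kxi i (f - 'X_i) -> tame_coordinate f.
Proof.
move=> ch Hl Eh Hn.
have El := lin_repr Hl.
have [j /andP [ji cj0]] : exists j, (j != i) && (l@_U_(j) != 0).
  case: (boolP [exists j, (j != i) && (l@_U_(j) != 0)]) => [/existsP //|H].
  exfalso; apply: Hn; set a := l@_U_(i).
  have El' : l = a *: 'X_i.
    rewrite {1}El (bigD1 i) //= big1 ?addr0 // => k Hk.
    by move/existsPn: H => /(_ k); rewrite Hk /= negbK => /eqP ->; rewrite scale0r.
  exists (\poly_(k < size q) (q`_k * a ^+ k)).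
  rewrite Eh El' [RHS](usubst_widen _ (size_poly _ _)) /usubst.
  by apply: eq_bigr => k _; rewrite coef_poly ltn_ord exprZn scalerA.
pose p2 := \sum_(k < n | k != j) l@_U_(k) *: ('X_k : {mpoly K[n]}).
pose Eo : polymap K n := [tuple (if a == i then 'X_a + usubst q 'X_j else 'X_a) | a < n].
pose E2 : polymap K n := [tuple (if a == j then 'X_a + p2 else 'X_a) | a < n].
pose d : 'rV[K]_n := \row_k (if k == j then l@_U_(j) else 1).
pose D : polymap K n := [tuple \sum_(b < n) diag_mx d a b *: 'X_b + ((fun _ : 'I_n => (0:K)) a)%:MP | a < n].
have tD : forall a, tnth D a = (if a == j then l@_U_(j) else 1) *: 'X_a.
  move=> a; rewrite tnth_mktuple mpolyC0 addr0 (bigD1 a) //= big1 ?addr0.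
    by rewrite mxE eqxx mulr1n mxE.
  by move=> b Hb; rewrite mxE eq_sym (negbTE Hb) mulr0n scale0r.
exists (pm_comp (pm_comp (pm_comp (pm_id K n) Eo) E2) D), i; split.
  apply: tame_aff; first apply: tame_elem; first apply: tame_elem.
  - exact: tame_id.
  - exists i, (usubst q 'X_j); split => //.
    by apply: (nodep_deriv0 ch); exact: deriv_usubstX.
  - exists j, p2; split => //.
    apply: (nodep_deriv0 ch); rewrite raddf_sum big1 // => k Hk.
    by rewrite /= mderivZ derivX_ne // scaler0.
  - exists (diag_mx d), (fun _ => 0); split => //.
    rewrite unitmxE det_diag unitfE; apply/prodf_neq0 => k _.
    by rewrite mxE; case: (k == j); [exact: cj0 | exact: oner_neq0].
rewrite /pm_comp /pm_id !tnth_mktuple.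
rewrite comp_X_tnth tnth_mktuple eqxx.
rewrite comp_mpolyD comp_usubst !comp_X_tnth !tnth_mktuple eqxx eq_sym (negbTE ji).
rewrite comp_mpolyD comp_usubst comp_mpolyD !comp_X_tnth !tD eq_sym (negbTE ji) eqxx scale1r.
have -> : p2 \mPo D = p2.
  rewrite raddf_sum; apply: eq_bigr => k Hk.
  by rewrite /= comp_mpolyZ comp_X_tnth tD (negbTE Hk) scale1r.
have <- : l = l@_U_(j) *: 'X_j + p2 by rewrite {1}El (bigD1 j).
by rewrite -Eh addrC subrK.
Qed.

End H.

Theorem proposition3p4 (K : fieldType) (n : nat) (i : 'I_n) (f : {mpoly K[n]})
  (q : {poly K}) (l : {mpoly K[n]}) :
  [pchar K] =i pred0 ->
  msize f != 2%N ->
  l \is 1.-homog ->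
  f - 'X_i = usubst q l ->
  (in_Kxi i (f - 'X_i) -> ~ keller_component f) /\
  (~ in_Kxi i (f - 'X_i) -> tame_coordinate f).
Proof.
move=> ch Hs Hl Eh; split.
  by move=> [R ER]; exact: (part1 ch Hs ER).
exact: (part2 ch Hl Eh).
Qed.
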